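(* Let $\mathcal{H} = \mathbb{C}^2 \otimes \mathbb{C}^2$ with standard basis $e_1, e_2$ of $\mathbb{C}^2$, let $\mathfrak{N}_1 = \mathbb{B}(\mathbb{C}^2) \otimes I$ and $\mathfrak{N}_2 = I \otimes \mathbb{B}(\mathbb{C}^2)$, and let $$\Psi_2 = \tfrac{1}{2}\, e_1 \otimes e_1 + \tfrac{\sqrt{3}}{2}\, e_2 \otimes e_2 .$$ Then the vector state $\omega(X) = \langle \Psi_2, X\Psi_2\rangle$ on $\mathfrak{N}_1 \vee \mathfrak{N}_2 = \mathbb{B}(\mathcal{H})$ is not an EPR state for incommensurable pairs.
   Context: $[X,Y] = XY - YX$, $|X|^2 = X^*X$. For commuting self-adjoint operators $A_1, A_2$, a normal state $\omega$ is an EPR state for $(A_1, A_2)$ if $\omega((A_1 - A_2)^2) = 0$. A normal state $\omega$ of $\mathfrak{N}_1 \vee \mathfrak{N}_2$ (where $\mathfrak{N}_1 \subseteq \mathfrak{N}_2'$) is an EPR state for incommensurable pairs if there exist projections $E_1, F_1 \in \mathfrak{N}_1$ and $E_2, F_2 \in \mathfrak{N}_2$ such that $\omega$ is an EPR state for $(E_1,E_2)$ and for $(F_1,F_2)$, $\omega(|[E_1,F_1]|^2) \neq 0$, and $\omega(|[E_2,F_2]|^2) \neq 0$. *)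

(* Defs.v *)
From HB Require Import structures.
From mathcomp Require Import all_boot all_order all_algebra all_field.
Set Implicit Arguments. Unset Strict Implicit. Unset Printing Implicit Defensive.
Import Order.TTheory GRing.Theory Num.Theory.
Local Open Scope ring_scope.

Definition adj {m n : nat} (A : 'M[algC]_(m, n)) : 'M[algC]_(n, m) :=
  (map_mx Num.conj A)^T.

(* Kronecker product C^2 (x) C^2 = C^4, with e_a (x) e_b |-> basis index 2a+b *)
Definition kron (A B : 'M[algC]_2) : 'M[algC]_4 :=
  \matrix_(i < 4, j < 4)
     (A (inord (i %/ 2)) (inord (j %/ 2)) * B (inord (i %% 2)) (inord (j %% 2))).

Definition comm {n : nat} (X Y : 'M[algC]_n) : 'M[algC]_n := X *m Y - Y *m X.
Definition abs2 {n : nat} (X : 'M[algC]_n) : 'M[algC]_n := adj X *m X.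

Definition inN1 (X : 'M[algC]_4) : Prop := exists A : 'M[algC]_2, X = kron A 1%:M.
Definition inN2 (X : 'M[algC]_4) : Prop := exists B : 'M[algC]_2, X = kron 1%:M B.

Definition is_projection {n : nat} (P : 'M[algC]_n) : Prop :=
  P *m P = P /\ adj P = P.

Definition Psi2 : 'cV[algC]_4 :=
  \col_(i < 4) (if val i == 0%N then 2^-1
                else if val i == 3%N then sqrtC 3 / 2 else 0).

Definition vstate (Psi : 'cV[algC]_4) (X : 'M[algC]_4) : algC :=
  (adj Psi *m X *m Psi) ord0 ord0.

Definition EPR_pair (w : 'M[algC]_4 -> algC) (A1 A2 : 'M[algC]_4) : Prop :=
  w ((A1 - A2) *m (A1 - A2)) = 0.

Definition EPR_incommensurable (w : 'M[algC]_4 -> algC) : Prop :=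
  exists E1 F1 E2 F2 : 'M[algC]_4,
    [/\ inN1 E1 /\ is_projection E1, inN1 F1 /\ is_projection F1,
        inN2 E2 /\ is_projection E2, inN2 F2 /\ is_projection F2 &
    [/\ EPR_pair w E1 E2, EPR_pair w F1 F2,
        w (abs2 (comm E1 F1)) != 0 & w (abs2 (comm E2 F2)) != 0]].

(* Main.v *)
Require Import Defs.
From mathcomp Require Import all_boot all_order all_algebra all_field.
From mathcomp Require Import ring.
Import GRing.Theory Num.Theory.
Local Open Scope ring_scope.
Lemma adjM m n p (A : 'M[algC]_(m,n)) (B : 'M[algC]_(n,p)) : adj (A *m B) = adj B *m adj A.
Proof. by rewrite /adj map_mxM trmx_mul. Qed.
Lemma adjB m n (A B : 'M[algC]_(m,n)) : adj (A - B) = adj A - adj B.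
Proof. by rewrite /adj map_mxB linearB. Qed.

Lemma vstate_sq (X : 'M[algC]_4) : adj X = X ->
  vstate Psi2 (X *m X) = \sum_k ((X *m Psi2) k 0)^* * (X *m Psi2) k 0.
Proof.
move=> hX; rewrite /vstate -{1}hX mulmxA -adjM -mulmxA.
by rewrite mxE; apply: eq_bigr => k _; rewrite !mxE.
Qed.

Definition simpl_div := (erefl : (0 %/ 2 = 0)%N, erefl : (1 %/ 2 = 0)%N,
  erefl : (2 %/ 2 = 1)%N, erefl : (3 %/ 2 = 1)%N, erefl : (0 %% 2 = 0)%N,
  erefl : (1 %% 2 = 1)%N, erefl : (2 %% 2 = 0)%N, erefl : (3 %% 2 = 1)%N).
Lemma e10 : (inord 1 == inord 0 :> 'I_2) = false.
Proof. by rewrite -val_eqE /= !inordK. Qed.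
Lemma e01 : (inord 0 == inord 1 :> 'I_2) = false.
Proof. by rewrite -val_eqE /= !inordK. Qed.
Lemma v1 (A B : 'M[algC]_2) : ((kron A 1%:M - kron 1%:M B) *m Psi2) (inord 1) 0 =
   A (inord 0) (inord 1) * (sqrtC 3 / 2) - B (inord 1) (inord 0) / 2.
Proof.
rewrite mxE !big_ord_recr big_ord0 /= !mxE /= inordK //.
rewrite ?simpl_div ?e10 ?e01 ?eqxx /=; ring.
Qed.

Lemma v2 (A B : 'M[algC]_2) : ((kron A 1%:M - kron 1%:M B) *m Psi2) (inord 2) 0 =
   A (inord 1) (inord 0) / 2 - B (inord 0) (inord 1) * (sqrtC 3 / 2).
Proof.
rewrite mxE !big_ord_recr big_ord0 /= !mxE /= inordK //.
rewrite ?simpl_div ?e10 ?e01 ?eqxx /=; ring.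
Qed.

Lemma adjA (A : 'M[algC]_2) : adj (kron A 1%:M) = kron A 1%:M ->
  A (inord 1) (inord 0) = (A (inord 0) (inord 1))^*.
Proof.
move/matrixP=> /(_ (inord 2) (inord 0)); rewrite !mxE /= !inordK //.
rewrite ?simpl_div ?e10 ?e01 ?eqxx /= ; rewrite ?mulr1 ?mul1r => <-; by rewrite ?mulr1 ?mul1r ?rmorph1 ?mulr1.
Qed.

Lemma adjB' (A : 'M[algC]_2) : adj (kron 1%:M A) = kron 1%:M A ->
  A (inord 1) (inord 0) = (A (inord 0) (inord 1))^*.
Proof.
move/matrixP=> /(_ (inord 1) (inord 0)); rewrite !mxE /= !inordK //.
rewrite ?simpl_div ?e10 ?e01 ?eqxx /= ; rewrite ?mulr1 ?mul1r => <-; by rewrite ?mulr1 ?mul1r ?rmorph1 ?mulr1 ?mul1r.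
Qed.


Lemma epr_diag (A B : 'M[algC]_2) : adj (kron A 1%:M) = kron A 1%:M ->
  adj (kron 1%:M B) = kron 1%:M B ->
  EPR_pair (vstate Psi2) (kron A 1%:M) (kron 1%:M B) ->
  A (inord 0) (inord 1) = 0 /\ A (inord 1) (inord 0) = 0.
Proof.
move=> hA hB; rewrite /EPR_pair vstate_sq; last by rewrite adjB hA hB.
set X := kron A 1%:M - kron 1%:M B => h0.
have hv k : (X *m Psi2) k 0 = 0.
  have hnn : forall i : 'I_4, predT i -> 0 <= ((X *m Psi2) i 0)^* * (X *m Psi2) i 0.
    by move=> i _; rewrite mulrC mul_conjC_ge0.
  move: (psumr_eq0P hnn h0 (i:=k) isT) => /eqP.
  by rewrite mulrC mul_conjC_eq0 => /eqP.
have h1 := hv (inord 1); have h2 := hv (inord 2).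
rewrite v1 in h1; rewrite v2 in h2.
rewrite (adjA A hA) (adjB' B hB) in h1 h2 *.
set a := A (inord 0) (inord 1) in h1 h2 *; set b := B (inord 0) (inord 1) in h1 h2 *.
set s := sqrtC 3 in h1 h2.
have hs : s^* = s by rewrite geC0_conj // sqrtC_ge0 ler0n.
have hs2 : s ^+ 2 = 3 by rewrite sqrtCK.
have h1' : a^* * (s / 2) - b / 2 = 0.
  have := congr1 (fun x => x^*) h1; rewrite /= rmorph0 rmorphB !rmorphM fmorphV.
  move=> h; have {h} : a^* * (s^* / (2:algC)^*) - b^*^* / (2:algC)^* = 0 by exact: h.
  rewrite hs conjCK.
  by rewrite rmorph_nat.
have n2 : (2 : algC) != 0 by rewrite pnatr_eq0.
have hb : b = 0.
  have : b * (s ^+ 2 - 1) = 2 * (a^* * (s / 2) - b / 2) - 2 * s * (a^* / 2 - b * (s / 2)).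
    by field.
  rewrite h1' h2 hs2 !mulr0 subrr => /eqP; rewrite mulf_eq0 => /orP [/eqP //|].
  by rewrite (_ : (3 : algC) - 1 = 2) ?(negbTE n2) //; ring.
have ha : a^* = 0.
  by move: h2; rewrite hb !mul0r subr0 => /eqP; rewrite mulf_eq0 invr_eq0 (negbTE n2) orbF => /eqP.
by split => //; move/eqP: ha; rewrite conjC_eq0 => /eqP.
Qed.

Lemma kron_diag (A : 'M[algC]_2) : A (inord 0) (inord 1) = 0 -> A (inord 1) (inord 0) = 0 ->
  kron A 1%:M = diag_mx (\row_(i < 4) A (inord (i %/ 2)) (inord (i %/ 2))).
Proof.
move=> h01 h10; apply/matrixP => i j; rewrite !mxE.
case: i => [[|[|[|[|i]]]] hi] //; case: j => [[|[|[|[|j]]]] hj] //=;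
  rewrite ?simpl_div ?e10 ?e01 ?eqxx ?h01 ?h10 /=;
  by rewrite ?mulr1 ?mulr0 ?mul0r ?mulr0n ?mulr1n.
Qed.

Theorem mainTheorem4 : ~ EPR_incommensurable (vstate Psi2).
Proof.
move=> [E1 [F1 [E2 [F2 [[[A ->] pE1] [[A' ->] pF1] [[B ->] pE2] [[B' ->] pF2] [h1 h2 h3 h4]]]]]].
have [a01 a10] := epr_diag A B pE1.2 pE2.2 h1.
have [c01 c10] := epr_diag A' B' pF1.2 pF2.2 h2.
move: h3; rewrite (kron_diag A a01 a10) (kron_diag A' c01 c10) /comm diag_mxC subrr.
by rewrite /abs2 mulmx0 /vstate mulmx0 mul0mx mxE eqxx.
Qed.
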